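(* Let $\kappa:=\sup\{t\in[0,\infty): B(x_*,t)\subset\Omega\}$. Assume there exist $K>0$ and $0<p\le1$ with $$\|F'(x_* )^{-1}[F'(x)-F'(x_*+\tau(x-x_* ))]\|\le K(1-\tau^p)\|x-x_*\|^p\quad\text{for all }\tau\in[0,1],\ x\in B(x_*,\kappa).$$ Let $0\le\vartheta<1$, $0\le\omega_2<\omega_1$ with $\omega_1\vartheta+\omega_2<1$, $\lambda\in[0,(1-\omega_2-\omega_1\vartheta)/(\omega_1(1+\vartheta)))$, and $$\bar\sigma:=\min\Big\{\kappa,\Big[\frac{(1-\omega_1[(1+\vartheta)\lambda+\vartheta]-\omega_2)(p+1)}{K(p-\omega_1[(1+\vartheta)\lambda+\vartheta-p]-\omega_2(p+1)+1)}\Big]^{1/p}\Big\}.$$ Let $x_0\in C\cap B(x_*,\bar\sigma)\setminus\{x_*\}$, $\{\theta_k\}\subset[0,\lambda^2/2]$, and let $\{M_k\}$, $\{(s_k,r_k,y_k)\}$, $\{x_k\}$ be generated by the INL-CondG method (assume it does not stop). Assume for all $k\ge0$: $\|M_k^{-1}F'(x_k)\|\le\omega_1$, $\|M_k^{-1}F'(x_k)-I\|\le\omega_2$, and there are invertible $P_k$ and scalars $\eta_k$ with $\|P_kr_k\|\le\eta_k\|P_kF(x_k)\|$ and $0\le\eta_k\,\mathrm{cond}(P_kF'(x_k))\le\vartheta$. Then $\{x_k\}\subset B(x_*,\bar\sigma)\cap C$, $x_k\to x_*$, $$\|x_{k+1}-x_*\|<\|x_k-x_*\|,\qquad \limsup_{k\to\infty}\frac{\|x_{k+1}-x_*\|}{\|x_k-x_*\|}\le\omega_1[(1+\vartheta)\sqrt{2\tilde\theta}+\vartheta]+\omega_2,$$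 with $\tilde\theta=\limsup_k\theta_k$, and for all $k\ge0$ $$\|x_{k+1}-x_*\|\le\frac{\omega_1(1+\vartheta)(1+\lambda)pK}{(p+1)[1-K\|x_0-x_*\|^p]}\|x_k-x_*\|^{p+1}+\big(\omega_1[(1+\vartheta)\lambda+\vartheta]+\omega_2\big)\|x_k-x_*\|.$$
   Context: Setting: $\Omega\subset\mathbb{R}^n$ is open, $F:\Omega\to\mathbb{R}^n$ is continuously differentiable with Jacobian $F'(x)$, $C\subset\Omega$ is a nonempty convex compact set, and $x_*\in C$ satisfies $F(x_* )=0$ with $F'(x_* )$ nonsingular. $\|\cdot\|$ is the Euclidean norm on $\mathbb{R}^n$ and the induced operator norm on matrices; $B(a,\delta)$ is the open ball of center $a$ and radius $\delta$; $\mathrm{cond}(A)=\|A^{-1}\|\|A\|$. CondG procedure $z=\mathrm{CondG}(y,x,\varepsilon)$ (for $y\in\mathbb{R}^n$, $x\in C$, $\varepsilon\ge0$): set $z_1=x$, $t=1$. (P1) Compute an optimal solution $u_t$ of $g_t^*=\min_{u\in C}\langle z_t-y,u-z_t\rangle$. (P2) If $g_t^*\ge-\varepsilon$, set $z=z_t$ and stop; otherwise set $\alpha_t=\min\{1,-g_t^*/\|u_t-z_t\|^2\}$, $z_{t+1}=z_t+\alpha_t(u_t-z_t)$, $t\leftarrow t+1$ and go to (P1). INL-CondG method: given $x_0\in C$ and $\{\theta_j\}\subset[0,\infty)$, for $k=0,1,\dots$: if $F(x_k)=0$ stop; otherwise choose an invertible matrix $M_k$ (approximating $F'(x_k)$)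 and compute $(s_k,r_k,y_k)$ with $M_ks_k=-F(x_k)+r_k$, $y_k=x_k+s_k$; then set $x_{k+1}=\mathrm{CondG}(y_k,x_k,\theta_k\|s_k\|^2)$. *)

(* Defs.v *)
From mathcomp Require Import ssreflect ssrfun ssrbool eqtype ssrnat seq fintype bigop.
From Stdlib Require Import Reals ClassicalEpsilon.

Set Implicit Arguments.
Unset Strict Implicit.

Local Open Scope R_scope.

Definition vec (n : nat) := 'I_n -> R.
Definition mat (n : nat) := 'I_n -> 'I_n -> R.

Section LinAlg.
Context {n : nat}.

Definition vadd (x y : vec n) : vec n := fun i => x i + y i.
Definition vsub (x y : vec n) : vec n := fun i => x i - y i.
Definition vopp (x : vec n) : vec n := fun i => - x i.
Definition vscal (a : R) (x : vec n) : vec n := fun i => a * x i.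
Definition vzero : vec n := fun _ => 0.

Definition vinner (x y : vec n) : R := \big[Rplus/0]_(i < n) (x i * y i).
Definition vnorm (x : vec n) : R := sqrt (vinner x x).
Definition vdist (x y : vec n) : R := vnorm (vsub x y).

Definition mv (A : mat n) (x : vec n) : vec n :=
  fun i => \big[Rplus/0]_(j < n) (A i j * x j).
Definition mm (A B : mat n) : mat n :=
  fun i k => \big[Rplus/0]_(j < n) (A i j * B j k).
Definition msub (A B : mat n) : mat n := fun i j => A i j - B i j.
Definition mid : mat n := fun i j => if i == j then 1 else 0.

Definition invertible (A : mat n) : Prop :=
  exists B : mat n, mm A B = mid /\ mm B A = mid.
(* the inverse matrix (meaningful when A is invertible) *)
Definition minv (A : mat n) : mat n :=
  epsilon (inhabits mid) (fun B => mm A B = mid /\ mm B A = mid).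

Definition opnorm (A : mat n) : R :=
  epsilon (inhabits 0)
    (fun c => is_lub (fun r => exists x : vec n, vnorm x <= 1 /\ r = vnorm (mv A x)) c).
Definition cond (A : mat n) : R := opnorm (minv A) * opnorm A.

Definition vopen (U : vec n -> Prop) : Prop :=
  forall x, U x -> exists r, 0 < r /\ forall z, vdist z x < r -> U z.
Definition vconvex (C : vec n -> Prop) : Prop :=
  forall x y t, C x -> C y -> 0 <= t <= 1 -> C (vadd x (vscal t (vsub y x))).
Definition vcompact (C : vec n -> Prop) : Prop :=
  forall (I : Type) (U : I -> vec n -> Prop),
    (forall i, vopen (U i)) ->
    (forall x, C x -> exists i, U i x) ->
    exists l : list I, forall x, C x -> exists i, List.In i l /\ U i x.

Definition has_jacobian_on (Omega : vec n -> Prop) (F : vec n -> vec n)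
  (DF : vec n -> mat n) : Prop :=
  forall x, Omega x -> forall eps, 0 < eps -> exists delta, 0 < delta /\
    forall h : vec n, vnorm h < delta -> Omega (vadd x h) ->
      vnorm (vsub (vsub (F (vadd x h)) (F x)) (mv (DF x) h)) <= eps * vnorm h.
Definition continuous_on (Omega : vec n -> Prop) (DF : vec n -> mat n) : Prop :=
  forall x, Omega x -> forall eps, 0 < eps -> exists delta, 0 < delta /\
    forall z, Omega z -> vdist z x < delta -> opnorm (msub (DF z) (DF x)) < eps.
Definition C1_on (Omega : vec n -> Prop) (F : vec n -> vec n) (DF : vec n -> mat n) :=
  has_jacobian_on Omega F DF /\ continuous_on Omega DF.

(* The CondG procedure, as a relation: condG C y eps x z means that
   z = CondG(y, x, eps) is a possible (terminating) output, the optimal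
   solutions u_t of the linear subproblems being any minimizers. *)
Definition lin_opt (C : vec n -> Prop) (y z u : vec n) : Prop :=
  C u /\ forall v, C v -> vinner (vsub z y) (vsub u z) <= vinner (vsub z y) (vsub v z).

Inductive condG (C : vec n -> Prop) (y : vec n) (eps : R) : vec n -> vec n -> Prop :=
| condG_stop : forall z u,
    lin_opt C y z u -> - eps <= vinner (vsub z y) (vsub u z) ->
    condG C y eps z z
| condG_step : forall z u z',
    lin_opt C y z u -> vinner (vsub z y) (vsub u z) < - eps ->
    condG C y eps
      (vadd z (vscal (Rmin 1 (- vinner (vsub z y) (vsub u z) / (vnorm (vsub u z)) ^ 2))
                     (vsub u z))) z' ->
    condG C y eps z z'.

End LinAlg.

(* real power t^p for t >= 0, with the convention 0^p = 0 (p > 0) *)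
Definition rpow (t p : R) : R := if Rle_dec t 0 then 0 else Rpower t p.

(* extended-real suprema: None stands for +infinity *)
Definition is_ext_sup (E : R -> Prop) (k : option R) : Prop :=
  match k with
  | None => forall M, exists t, E t /\ M < t
  | Some s => is_lub E s
  end.
Definition ext_sup (E : R -> Prop) : option R :=
  epsilon (inhabits None) (is_ext_sup E).
Definition ext_lt (r : R) (k : option R) : Prop :=
  match k with None => True | Some s => r < s end.
Definition ext_min (k : option R) (r : R) : R :=
  match k with None => r | Some s => Rmin s r end.

(* limit superior of a real sequence (used for bounded sequences) *)
Definition is_limsup (u : nat -> R) (l : R) : Prop :=
  forall eps, 0 < eps ->
    (exists N, forall k, (N <= k)%nat -> u k < l + eps) /\
    (forall N, exists k, (N <= k)%nat /\ l - eps < u k).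
Definition limsup (u : nat -> R) : R := epsilon (inhabits 0) (is_limsup u).

(* Main.v *)
Require Import Defs.
From mathcomp Require Import ssreflect ssrfun ssrbool eqtype ssrnat seq fintype bigop.
From Stdlib Require Import Reals ClassicalEpsilon FunctionalExtensionality Lra Psatz.
From mathcomp Require Import ssralg matrix mxalgebra Rstruct.
From Coquelicot Require Import Rbar Lim_seq.
Import GRing.Theory.
Local Open Scope R_scope.
Set Implicit Arguments.
Unset Strict Implicit.

Section Bridge.
Variable n : nat.
Definition tm (A : mat n) : 'M[R]_n := \matrix_(i, j) A i j.
Definition tv (x : vec n) : 'cV[R]_n := \matrix_(i, j) x i.
Lemma tm_mm (A B : mat n) : tm (mm A B) = (tm A *m tm B)%R.
Proof. apply/matrixP=> i k; rewrite !mxE /mm. apply: eq_bigr => j _; by rewrite !mxE. Qed.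
Lemma tv_mv (A : mat n) (x : vec n) : tv (mv A x) = (tm A *m tv x)%R.
Proof. apply/matrixP=> i k; rewrite !mxE /mv. apply: eq_bigr => j _; by rewrite !mxE. Qed.
Lemma tm_mid : tm (@mid n) = 1%:M%R.
Proof. apply/matrixP=> i k; rewrite !mxE /mid. by case: (i == k). Qed.
Lemma tm_inj (A B : mat n) : tm A = tm B -> A = B.
Proof. move=> H; apply: functional_extensionality => i; apply: functional_extensionality => j.
have := congr1 (fun M : 'M[R]_n => M i j) H; by rewrite /= !mxE. Qed.
Lemma tv_inj (x y : vec n) : tv x = tv y -> x = y.
Proof. move=> H; apply: functional_extensionality => i.
have := congr1 (fun M : 'cV[R]_n => M i ord0) H; by rewrite /= !mxE. Qed.
Lemma mm_assoc (A B C : mat n) : mm A (mm B C) = mm (mm A B) C.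
Proof. apply: tm_inj; by rewrite !tm_mm mulmxA. Qed.
Lemma mv_mm (A B : mat n) (x : vec n) : mv (mm A B) x = mv A (mv B x).
Proof. apply: tv_inj; by rewrite !tv_mv tm_mm mulmxA. Qed.
Lemma mv_mid (x : vec n) : mv (@mid n) x = x.
Proof. apply: tv_inj; by rewrite tv_mv tm_mid mul1mx. Qed.
Lemma mm_mid_l (A : mat n) : mm (@mid n) A = A.
Proof. apply: tm_inj; by rewrite tm_mm tm_mid mul1mx. Qed.
Lemma mm_mid_r (A : mat n) : mm A (@mid n) = A.
Proof. apply: tm_inj; by rewrite tm_mm tm_mid mulmx1. Qed.

Lemma inj_invertible (D : mat n) :
  (forall v, mv D v = (@vzero n) -> v = (@vzero n)) -> invertible D.
Proof.
move=> Hinj.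
have Hdet : (\det (tm D) != 0)%R.
  apply/negP => /eqP H0.
  have : (\det (tm D)^T == 0)%R by rewrite det_tr H0.
  move/det0P => [w Hw0 Hw].
  pose v : vec n := fun i => w ord0 i.
  have Hv : mv D v = vzero.
    apply: functional_extensionality => j.
    transitivity ((w *m (tm D)^T)%R ord0 j); last by rewrite Hw mxE.
    rewrite /mv /vzero mxE; apply: eq_bigr => i _; rewrite !mxE /v; apply: Rmult_comm.
  have := Hinj v Hv => Hv0; move/negP: Hw0; apply; apply/eqP/matrixP => i j.
  rewrite (ord1 i) !mxE; have := congr1 (fun f => f j) Hv0; by rewrite /v /vzero.
have Hu : tm D \in unitmx by rewrite unitmxE unitfE.
exists (fun i j => invmx (tm D) i j); split; apply: tm_inj; rewrite tm_mm tm_mid.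
- have -> : tm (fun i j => invmx (tm D) i j) = invmx (tm D) by apply/matrixP=> i j; rewrite mxE.
  by rewrite mulmxV.
- have -> : tm (fun i j => invmx (tm D) i j) = invmx (tm D) by apply/matrixP=> i j; rewrite mxE.
  by rewrite mulVmx.
Qed.
End Bridge.
Ltac vext := let i := fresh "i" in apply: functional_extensionality => i;
  rewrite /vadd /vsub /vscal /vopp /vzero; try ring.

Section Vec.
Variable n : nat.
Implicit Types x y z : vec n.

Lemma sum_le (f g : 'I_n -> R) : (forall i, f i <= g i) ->
  \big[Rplus/0]_(i < n) f i <= \big[Rplus/0]_(i < n) g i.
Proof. move=> H; elim/big_rec2: _; [apply: Rle_refl| move=> i a b _ Hab; apply: Rplus_le_compat => //]. Qed.

Lemma sum_ge0 (f : 'I_n -> R) : (forall i, 0 <= f i) -> 0 <= \big[Rplus/0]_(i < n) f i.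
Proof. move=> H; elim/big_rec: _; [apply: Rle_refl| move=> i a _ Ha; have := H i; lra]. Qed.

Lemma sum_eq0 (f : 'I_n -> R) : (forall i, 0 <= f i) -> \big[Rplus/0]_(i < n) f i = 0 -> forall i, f i = 0.
Proof. move=> H H0 i; move: H0; rewrite (bigD1 i) //=; set S := bigop.body _ _ _ => H0.
have H1 : 0 <= S.
  rewrite /S; elim/big_rec: _; [apply: Rle_refl| move=> j a _ Ha; have := H j; lra].
have := H i; lra. Qed.

Lemma sum_scal a (f : 'I_n -> R) : \big[Rplus/0]_(i < n) (a * f i) = a * \big[Rplus/0]_(i < n) f i.
Proof. by rewrite big_distrr. Qed.

Lemma sum_add (f g : 'I_n -> R) : \big[Rplus/0]_(i < n) (f i + g i) = \big[Rplus/0]_(i < n) f i + \big[Rplus/0]_(i < n) g i.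
Proof. by rewrite big_split. Qed.

Lemma sum_opp (f : 'I_n -> R) : \big[Rplus/0]_(i < n) (- f i) = - \big[Rplus/0]_(i < n) f i.
Proof. transitivity (\big[Rplus/0]_(i < n) (-1 * f i)). by apply: eq_bigr => i _; ring.
rewrite sum_scal; ring. Qed.

Lemma vinner_comm x y : vinner x y = vinner y x.
Proof. rewrite /vinner; apply: eq_bigr => i _; ring. Qed.
Lemma vinner_addl x y z : vinner (vadd x y) z = vinner x z + vinner y z.
Proof. rewrite /vinner -sum_add; apply: eq_bigr => i _; rewrite /vadd; ring. Qed.
Lemma vinner_addr x y z : vinner z (vadd x y) = vinner z x + vinner z y.
Proof. rewrite /vinner -sum_add; apply: eq_bigr => i _; rewrite /vadd; ring. Qed.
Lemma vinner_scall a x y : vinner (vscal a x) y = a * vinner x y.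
Proof. rewrite /vinner -sum_scal; apply: eq_bigr => i _; rewrite /vscal; ring. Qed.
Lemma vinner_scalr a x y : vinner y (vscal a x) = a * vinner y x.
Proof. rewrite /vinner -sum_scal; apply: eq_bigr => i _; rewrite /vscal; ring. Qed.
Lemma vinner_subl x y z : vinner (vsub x y) z = vinner x z - vinner y z.
Proof. rewrite /vinner /Rminus -sum_opp -sum_add; apply: eq_bigr => i _; rewrite /vsub; ring. Qed.
Lemma vinner_subr x y z : vinner z (vsub x y) = vinner z x - vinner z y.
Proof. rewrite /vinner /Rminus -sum_opp -sum_add; apply: eq_bigr => i _; rewrite /vsub; ring. Qed.
Lemma vinner_ge0 x : 0 <= vinner x x.
Proof. apply: sum_ge0 => i; nra. Qed.
Lemma vinner_eq0 x : vinner x x = 0 -> x = vzero.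
Proof. move=> H; have H1 := @sum_eq0 (fun i => x i * x i) (fun i => ltac:(nra)) H.
vext; have := H1 i; rewrite /=; nra. Qed.
Lemma vinner_zerol y : vinner vzero y = 0.
Proof. rewrite /vinner big1 // => i _; rewrite /vzero; ring. Qed.

Lemma vnorm_ge0 x : 0 <= vnorm x.
Proof. apply: sqrt_pos. Qed.
Lemma vnorm_sq x : vnorm x * vnorm x = vinner x x.
Proof. apply: sqrt_sqrt; apply: vinner_ge0. Qed.
Lemma vnorm_eq0 x : vnorm x = 0 -> x = vzero.
Proof. move=> H; apply: vinner_eq0; rewrite -vnorm_sq H; ring. Qed.
Lemma vnorm_zero : vnorm (@vzero n) = 0.
Proof. by rewrite /vnorm vinner_zerol sqrt_0. Qed.

Lemma cs_sq x y : vinner x y * vinner x y <= vinner x x * vinner y y.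
Proof.
have Hy := vinner_ge0 y; have Hx := vinner_ge0 x.
case: (Req_dec (vinner y y) 0) => Hy0.
- rewrite (vinner_eq0 Hy0) vinner_comm !vinner_zerol; nra.
- have Hq : forall t, 0 <= vinner x x - 2 * t * vinner x y + t * t * vinner y y.
    move=> t; have := vinner_ge0 (vsub x (vscal t y)).
    rewrite !vinner_subl !vinner_subr !vinner_scall !vinner_scalr (vinner_comm y x); lra.
  have := Hq (vinner x y / vinner y y).
  have Hpos : 0 < vinner y y by lra.
  move=> H; set a := vinner x y in H *; set b := vinner y y in H Hpos *.
  have : 0 <= (vinner x x - 2 * (a / b) * a + a / b * (a / b) * b) * b by nra.
  have -> : (vinner x x - 2 * (a / b) * a + a / b * (a / b) * b) * b = vinner x x * b - a * a by field; lra.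
  lra.
Qed.

Lemma cs x y : vinner x y <= vnorm x * vnorm y.
Proof.
have := cs_sq x y; rewrite -!vnorm_sq => H.
have Hx := vnorm_ge0 x; have Hy := vnorm_ge0 y.
case: (Rle_dec (vinner x y) (vnorm x * vnorm y)) => Hs //.
have Hab : 0 <= vnorm x * vnorm y by nra.
have : 0 < (vinner x y - vnorm x * vnorm y) * (vinner x y + vnorm x * vnorm y) by apply: Rmult_lt_0_compat; lra.
nra.
Qed.

Lemma vnorm_add x y : vnorm (vadd x y) <= vnorm x + vnorm y.
Proof.
have Hx := vnorm_ge0 x; have Hy := vnorm_ge0 y; have Hxy := vnorm_ge0 (vadd x y).
have H := vnorm_sq (vadd x y); rewrite vinner_addl !vinner_addr (vinner_comm y x) -!vnorm_sq in H.
have := cs x y; nra.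
Qed.

Lemma vnorm_scal a x : vnorm (vscal a x) = Rabs a * vnorm x.
Proof. rewrite /vnorm vinner_scall vinner_scalr -Rmult_assoc sqrt_mult; last apply: vinner_ge0; last nra.
by rewrite -Rsqr_def sqrt_Rsqr_abs. Qed.

Lemma vnorm_opp x : vnorm (vopp x) = vnorm x.
Proof. have -> : vopp x = vscal (-1) x by vext. rewrite vnorm_scal Rabs_Ropp Rabs_R1; ring. Qed.

Lemma vnorm_sub x y : vnorm (vsub x y) <= vnorm x + vnorm y.
Proof. have -> : vsub x y = vadd x (vopp y) by vext. rewrite -(vnorm_opp y); apply: vnorm_add. Qed.

Lemma vdist_sym x y : vdist x y = vdist y x.
Proof. rewrite /vdist; have -> : vsub x y = vopp (vsub y x) by vext. by rewrite vnorm_opp. Qed.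

Lemma vdist_eq0 x y : vdist x y = 0 -> x = y.
Proof. move/vnorm_eq0 => H; apply: functional_extensionality => i; have := congr1 (fun f => f i) H; rewrite /vsub /vzero /=; lra. Qed.

Lemma mv_add (A : mat n) x y : mv A (vadd x y) = vadd (mv A x) (mv A y).
Proof. vext; rewrite /mv -sum_add; apply: eq_bigr => j _; ring. Qed.
Lemma mv_scal (A : mat n) a x : mv A (vscal a x) = vscal a (mv A x).
Proof. vext; rewrite /mv -sum_scal; apply: eq_bigr => j _; ring. Qed.
Lemma mv_sub (A : mat n) x y : mv A (vsub x y) = vsub (mv A x) (mv A y).
Proof. vext; rewrite /mv /Rminus -sum_opp -sum_add; apply: eq_bigr => j _; ring. Qed.
Lemma mv_opp (A : mat n) x : mv A (vopp x) = vopp (mv A x).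
Proof. vext; rewrite /mv -sum_opp; apply: eq_bigr => j _; ring. Qed.
Lemma mv_msub (A B : mat n) x : mv (msub A B) x = vsub (mv A x) (mv B x).
Proof. vext; rewrite /mv /Rminus -sum_opp -sum_add; apply: eq_bigr => j _; rewrite /msub; ring. Qed.
Lemma mv_zero (A : mat n) : mv A vzero = vzero.
Proof. vext; rewrite /mv big1 // => j _; ring. Qed.
End Vec.
Section Op.
Variable n : nat.
Implicit Types x y z : vec n.

Lemma vinner_opp x : vinner (vopp x) (vopp x) = vinner x x.
Proof. rewrite /vinner; apply: eq_bigr => i _; rewrite /vopp; ring. Qed.

Lemma cs_abs x y : Rabs (vinner x y) <= vnorm x * vnorm y.
Proof. apply: Rabs_le; split; last by apply: cs.
have := cs (vopp x) y; rewrite vnorm_opp.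
have -> : vinner (vopp x) y = - vinner x y.
  have -> : vopp x = vscal (-1) x by vext. rewrite vinner_scall; ring.
lra. Qed.

Definition opset (A : mat n) := fun r => exists x : vec n, vnorm x <= 1 /\ r = vnorm (mv A x).

Lemma opset_bound (A : mat n) : bound (opset A).
Proof.
pose S := \big[Rplus/0]_(i < n) vinner (fun j => A i j) (fun j => A i j).
exists (sqrt S) => r [x [Hx ->]].
apply: sqrt_le_1_alt.
rewrite /vinner /S; apply: sum_le => i.
have H1 := cs_sq (fun j => A i j) x.
have Hxx : vinner x x <= 1 by rewrite -vnorm_sq; have := vnorm_ge0 x; nra.
have Hii := vinner_ge0 (fun j => A i j).
rewrite /vinner in H1 Hxx Hii |- *; rewrite /mv; nra.
Qed.

Lemma opnorm_lub (A : mat n) : is_lub (opset A) (opnorm A).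
Proof.
rewrite /opnorm; apply: epsilon_spec.
have H0 : opset A 0 by exists vzero; rewrite mv_zero vnorm_zero; split; lra.
have [m Hm] := completeness (opset A) (opset_bound A) (ex_intro _ 0 H0).
by exists m.
Qed.

Lemma opnorm_ge0 (A : mat n) : 0 <= opnorm A.
Proof. have [H _] := opnorm_lub A; apply: H; exists vzero; rewrite mv_zero vnorm_zero; split; lra. Qed.

Lemma opnorm_mv (A : mat n) x : vnorm (mv A x) <= opnorm A * vnorm x.
Proof.
have Hx := vnorm_ge0 x.
case: (Req_dec (vnorm x) 0) => H0.
- rewrite (vnorm_eq0 H0) mv_zero vnorm_zero; have := opnorm_ge0 A; nra.
- have Hp : 0 < vnorm x by lra.
  have [Hub _] := opnorm_lub A.
  have H1 : vnorm (mv A (vscal (/ vnorm x) x)) <= opnorm A.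
    apply: Hub; eexists; split; last reflexivity.
    rewrite vnorm_scal Rabs_right; last by apply: Rle_ge; apply: Rlt_le; apply: Rinv_0_lt_compat.
    rewrite Rinv_l; lra.
  rewrite mv_scal vnorm_scal Rabs_right in H1; last by apply: Rle_ge; apply: Rlt_le; apply: Rinv_0_lt_compat.
  have := vnorm_ge0 (mv A x).
  have E : vnorm (mv A x) = (/ vnorm x * vnorm (mv A x)) * vnorm x by field.
  move=> _; rewrite E; apply: Rmult_le_compat_r; lra.
Qed.

Lemma minv_spec (A : mat n) : invertible A -> mm A (minv A) = mid /\ mm (minv A) A = mid.
Proof. move=> [B HB]; exact: (epsilon_spec (inhabits (@mid n)) (fun B : mat n => mm A B = mid /\ mm B A = mid) (ex_intro _ B HB)). Qed.

Lemma condG_prop (C : vec n -> Prop) y eps z z' : condG C y eps z z' ->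
  vconvex C -> C z -> 0 <= eps -> forall xt, C xt ->
  C z' /\ vinner (vsub z' xt) (vsub z' xt) <= vinner (vsub y xt) (vsub y xt) + 2 * eps.
Proof.
elim => {z z'}.
- move=> z u [Cu Hu] Hg Hconv Cz Heps xt Cxt; split => //.
  have H1 := Hu xt Cxt.
  have E1 : vsub y xt = vopp (vadd (vsub z y) (vsub xt z)) by vext.
  have E2 : vsub z xt = vopp (vsub xt z) by vext.
  rewrite E1 E2 !vinner_opp; move: H1 Hg; set a := vsub z y; set b := vsub xt z => H1 Hg.
  rewrite (vinner_addl a b) (vinner_addr a b a) (vinner_addr a b b) (vinner_comm b a).
  have := vinner_ge0 a; lra.
- move=> z u z' [Cu Hu] Hg _ IH Hconv Cz Heps xt Cxt.
  apply: IH => //; apply: Hconv => //; split; last by apply: Rmin_l.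
  apply: Rmin_glb; first lra.
  apply: Rmult_le_pos; first lra.
  case: (Req_dec (vnorm (vsub u z) ^ 2) 0) => H0; first by rewrite H0 Rinv_0; lra.
  apply: Rlt_le; apply: Rinv_0_lt_compat; have := vnorm_ge0 (vsub u z); nra.
Qed.
End Op.
Section Deriv.
Variable n : nat.

Lemma line_deriv (Omega : vec n -> Prop) F DF (HO : vopen Omega) (HJ : has_jacobian_on Omega F DF)
  (x0 e u : vec n) (A : mat n) t :
  Omega (vadd x0 (vscal t e)) ->
  derivable_pt_lim (fun s => vinner u (mv A (F (vadd x0 (vscal s e))))) t
     (vinner u (mv A (mv (DF (vadd x0 (vscal t e))) e))).
Proof.
move=> HX eps Heps.
set X := vadd x0 (vscal t e).
have [r [Hr Hball]] := HO X HX.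
have Hu := vnorm_ge0 u; have He := vnorm_ge0 e; have HA := opnorm_ge0 A.
set c := vnorm u * opnorm A * vnorm e + 1.
have Hc : 0 < c by rewrite /c; have := Rmult_le_pos _ _ (Rmult_le_pos _ _ Hu HA) He; lra.
have Hec : 0 < eps / (2 * c) by apply: Rdiv_lt_0_compat; lra.
have [d1 [Hd1 Hfr]] := HJ X HX (eps / (2*c)) Hec.
have Hm : 0 < Rmin d1 r by apply: Rmin_glb_lt.
have Hdel : 0 < Rmin d1 r / (vnorm e + 1) by apply: Rdiv_lt_0_compat; lra.
exists (mkposreal _ Hdel) => h Hh0 /= Hh.
have Ek : vadd x0 (vscal (t + h) e) = vadd X (vscal h e) by rewrite /X; vext.
rewrite Ek.
have Hk : vnorm (vscal h e) < Rmin d1 r.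
  rewrite vnorm_scal.
  have Hh1 : Rabs h * (vnorm e + 1) < Rmin d1 r.
    have := Rmult_lt_compat_r (vnorm e + 1) _ _ ltac:(lra) Hh.
    rewrite /Rdiv Rmult_assoc Rinv_l; lra.
  have := Rabs_pos h; nra.
have HO' : Omega (vadd X (vscal h e)).
  apply: Hball; rewrite /vdist.
  have -> : vsub (vadd X (vscal h e)) X = vscal h e by vext.
  have := Rmin_r d1 r; lra.
have Hf := Hfr (vscal h e) ltac:(have := Rmin_l d1 r; lra) HO'.
set w := vsub (vsub (F (vadd X (vscal h e))) (F X)) (mv (DF X) (vscal h e)) in Hf.
have Eq : vinner u (mv A (F (vadd X (vscal h e)))) - vinner u (mv A (F X))
   = vinner u (mv A w) + h * vinner u (mv A (mv (DF X) e)).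
  rewrite /w !mv_sub !vinner_subr mv_scal mv_scal vinner_scalr; ring.
rewrite Eq.
have -> : (vinner u (mv A w) + h * vinner u (mv A (mv (DF X) e))) / h - vinner u (mv A (mv (DF X) e))
   = vinner u (mv A w) / h by field.
rewrite /Rdiv Rabs_mult Rabs_inv.
have Hh' : 0 < Rabs h by apply: Rabs_pos_lt.
apply: (Rmult_lt_reg_r (Rabs h)) => //.
rewrite /Rdiv Rmult_assoc Rinv_l; last lra.
rewrite Rmult_1_r.
have H1 := cs_abs u (mv A w).
have H2 := opnorm_mv A w.
rewrite vnorm_scal in Hf.
have Hw := vnorm_ge0 w.
have H3 : Rabs (vinner u (mv A w)) <= vnorm u * (opnorm A * (eps / (2 * c) * (Rabs h * vnorm e))).
  apply: (Rle_trans _ _ _ H1); apply: Rmult_le_compat_l => //.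
  apply: (Rle_trans _ _ _ H2); apply: Rmult_le_compat_l => //.
apply: (Rle_lt_trans _ _ _ H3).
have -> : vnorm u * (opnorm A * (eps / (2 * c) * (Rabs h * vnorm e)))
  = (vnorm u * opnorm A * vnorm e) / c * (eps / 2) * Rabs h by field; lra.
have : (vnorm u * opnorm A * vnorm e) / c < 1.
  apply: (Rmult_lt_reg_r c) => //. rewrite /Rdiv Rmult_assoc Rinv_l; [rewrite /c; lra| lra].
have : 0 <= (vnorm u * opnorm A * vnorm e) / c.
  apply: Rmult_le_pos; [apply: Rmult_le_pos => //; apply: Rmult_le_pos => // | apply: Rlt_le; apply: Rinv_0_lt_compat => //].
move=> Ha Hb; set a := (vnorm u * opnorm A * vnorm e) / c in Ha Hb *.
apply: Rmult_lt_compat_r => //; nra.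
Qed.
End Deriv.
Lemma Rpower_1_base q : Rpower 1 q = 1.
Proof. by rewrite /Rpower ln_1 Rmult_0_r exp_0. Qed.
Lemma Rpower_gt0 t q : 0 < Rpower t q.
Proof. apply: exp_pos. Qed.
Lemma Rpower_le1 t q : 0 <= q -> 0 < t <= 1 -> Rpower t q <= 1.
Proof. move=> Hq Ht; rewrite -(Rpower_1_base q); apply: Rle_Rpower_l => //. Qed.
Lemma rpow_pos t q : 0 < t -> rpow t q = Rpower t q.
Proof. move=> Ht; rewrite /rpow; case: (Rle_dec t 0) => H //; lra. Qed.
Lemma rpow_ge0 t q : 0 <= rpow t q.
Proof. rewrite /rpow; case: (Rle_dec t 0) => H /=; [lra| apply: Rlt_le; apply: Rpower_gt0]. Qed.
Lemma rpow_0 q : rpow 0 q = 0.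
Proof. rewrite /rpow; case: (Rle_dec 0 0) => H //; lra. Qed.
Lemma rpow_plus1 t q : 0 <= t -> rpow t (q + 1) = t * rpow t q.
Proof. move=> Ht; case: (Req_dec t 0) => [->|H0]; first by rewrite !rpow_0; ring.
rewrite !rpow_pos; try lra. rewrite Rpower_plus Rpower_1; lra. Qed.
Lemma rpow_le a b q : 0 <= q -> 0 <= a <= b -> rpow a q <= rpow b q.
Proof. move=> Hq Hab; case: (Req_dec a 0) => [->|H0]; first by rewrite rpow_0; apply: rpow_ge0.
rewrite !rpow_pos; try lra. apply: Rle_Rpower_l; lra. Qed.
Lemma rpow_le1 t q : 0 <= q -> 0 <= t <= 1 -> rpow t q <= 1.
Proof. move=> Hq Ht; case: (Req_dec t 0) => [->|H0]; first by rewrite rpow_0; lra.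
rewrite rpow_pos; try lra. apply: Rpower_le1; lra. Qed.

Lemma le_of_small X C a1 : 0 < a1 -> 0 <= C -> (forall a, 0 < a < a1 -> X <= a * C) -> X <= 0.
Proof.
move=> Ha1 HC H; case: (Rle_dec X 0) => // HX.
have HX' : 0 < X by lra.
set a := Rmin (a1 / 2) (X / (2 * (C + 1))).
have Ha : 0 < a by apply: Rmin_glb_lt; apply: Rdiv_lt_0_compat; lra.
have Ha2 : a <= X / (2 * (C + 1)) by apply: Rmin_r.
have Ha3 : a <= a1 / 2 by apply: Rmin_l.
have := H a ltac:(lra).
have : a * C <= X / (2 * (C + 1)) * C by apply: Rmult_le_compat_r.
have : X / (2 * (C + 1)) * C < X.
  have -> : X / (2 * (C + 1)) * C = X * (C / (2 * (C + 1))) by field; lra.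
  have : C / (2 * (C + 1)) < 1.
    apply: (Rmult_lt_reg_r (2 * (C+1))); first lra.
    rewrite /Rdiv Rmult_assoc Rinv_l; lra.
  nra.
lra.
Qed.

Section Taylor.
Variable n : nat.

Lemma small_F (Omega : vec n -> Prop) F DF (HO : vopen Omega) (HJ : has_jacobian_on Omega F DF)
  (xs e : vec n) : F xs = vzero -> Omega xs ->
  exists a0, 0 < a0 /\ forall a, 0 < a < a0 ->
    vnorm (F (vadd xs (vscal a e))) <= a * ((opnorm (DF xs) + 1) * vnorm e).
Proof.
move=> HF HX.
have [r [Hr Hball]] := HO xs HX.
have [d1 [Hd1 Hfr]] := HJ xs HX 1 Rlt_0_1.
have Hm : 0 < Rmin d1 r by apply: Rmin_glb_lt.
have He := vnorm_ge0 e.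
exists (Rmin d1 r / (vnorm e + 1)); split; first by apply: Rdiv_lt_0_compat; lra.
move=> a Ha.
have Hk : vnorm (vscal a e) < Rmin d1 r.
  rewrite vnorm_scal Rabs_right; last lra.
  have Hh1 : a * (vnorm e + 1) < Rmin d1 r.
    have := Rmult_lt_compat_r (vnorm e + 1) _ _ ltac:(lra) (proj2 Ha).
    rewrite /Rdiv Rmult_assoc Rinv_l; lra.
  nra.
have HO' : Omega (vadd xs (vscal a e)).
  apply: Hball; rewrite /vdist.
  have -> : vsub (vadd xs (vscal a e)) xs = vscal a e by vext.
  have := Rmin_r d1 r; lra.
have Hf := Hfr (vscal a e) ltac:(have := Rmin_l d1 r; lra) HO'.
rewrite HF in Hf.
have -> : F (vadd xs (vscal a e)) = vadd (vsub (vsub (F (vadd xs (vscal a e))) vzero) (mv (DF xs) (vscal a e))) (mv (DF xs) (vscal a e)) by vext.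
apply: (Rle_trans _ _ _ (vnorm_add _ _)).
have := opnorm_mv (DF xs) (vscal a e).
rewrite !vnorm_scal Rabs_right in Hf |- *; last lra.
move=> H2; have := opnorm_ge0 (DF xs); nra.
Qed.

Lemma taylor (Omega : vec n -> Prop) F DF (HO : vopen Omega) (HJ : has_jacobian_on Omega F DF)
  (xs x : vec n) (A : mat n) K p (HK : 0 <= K) (Hp : 0 < p) (HFxs : F xs = vzero)
  (Hseg : forall t, 0 <= t <= 1 -> Omega (vadd xs (vscal t (vsub x xs))))
  (Hc : forall t, 0 <= t <= 1 ->
     opnorm (mm A (msub (DF x) (DF (vadd xs (vscal t (vsub x xs)))))) <= K * (1 - rpow t p) * rpow (vdist x xs) p) :
  vnorm (vsub (mv A (mv (DF x) (vsub x xs))) (mv A (F x))) <= K * p / (p + 1) * rpow (vdist x xs) (p + 1).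
Proof.
rewrite /vdist in Hc |- *.
set e := vsub x xs in Hseg Hc *.
set D := DF x in Hc *.
set d := vsub (mv A (mv D e)) (mv A (F x)).
have HE := vnorm_ge0 e.
have HRHS : 0 <= K * p / (p + 1) * rpow (vnorm e) (p + 1).
  apply: Rmult_le_pos; last by apply: rpow_ge0.
  apply: Rmult_le_pos; [apply: Rmult_le_pos; lra| apply: Rlt_le; apply: Rinv_0_lt_compat; lra].
case: (Req_dec (vnorm e) 0) => HE0.
  have Hx : x = xs.
    have := vnorm_eq0 HE0; rewrite /e => H; apply: functional_extensionality => i.
    have := congr1 (fun f => f i) H; rewrite /vsub /vzero /=; lra.
  have -> : d = vzero.
    rewrite /d /e Hx HFxs.
    have -> : vsub xs xs = vzero by vext.
    rewrite !mv_zero; vext.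
  by rewrite vnorm_zero.
have HEp : 0 < vnorm e by lra.
rewrite rpow_plus1 // in HRHS |- *.
rewrite rpow_pos // in Hc HRHS |- *.
set Ep := Rpower (vnorm e) p in Hc HRHS |- *.
have HEp0 : 0 < Ep by apply: Rpower_gt0.
have Hd := vnorm_ge0 d.
set k1 := vinner d (mv A (mv D e)).
set c0 := vnorm d * K * Ep * vnorm e.
have Hc0 : 0 <= c0 by rewrite /c0; apply: Rmult_le_pos; [apply: Rmult_le_pos; [apply: Rmult_le_pos|]|]; lra.
pose phi s := s * k1 - vinner d (mv A (F (vadd xs (vscal s e)))).
pose H s := c0 * (s - Rpower s (p + 1) / (p + 1)).
pose psi s := phi s - H s.
pose psi' s := (k1 - vinner d (mv A (mv (DF (vadd xs (vscal s e))) e))) - c0 * (1 - Rpower s p).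
have Hsegin : forall s, 0 <= s <= 1 -> Omega (vadd xs (vscal s e)) by move=> s Hs; apply: Hseg.
have Hder : forall s, 0 < s <= 1 -> derivable_pt_lim psi s (psi' s).
  move=> s Hs.
  have D1 : derivable_pt_lim (fun s => s * k1) s k1.
    have := derivable_pt_lim_scal_right id s 1 k1 (derivable_pt_lim_id s).
    by rewrite Rmult_1_l.
  have D2 := line_deriv HO HJ d A (Hsegin s ltac:(lra)).
  have D3 := derivable_pt_lim_power s (p + 1) ltac:(lra).
  have D4 : derivable_pt_lim (fun s => s - Rpower s (p + 1) / (p + 1)) s (1 - Rpower s p).
    have := derivable_pt_lim_minus _ _ _ _ _ (derivable_pt_lim_id s)
              (derivable_pt_lim_scal_right _ _ _ (/ (p + 1)) D3).
    have -> : 1 - (p + 1) * Rpower s (p + 1 - 1) * / (p + 1) = 1 - Rpower s p.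
      replace (p + 1 - 1) with p by ring; field; lra.
    by [].
  have D5 := derivable_pt_lim_scal _ c0 _ _ D4.
  have D6 := derivable_pt_lim_minus _ _ _ _ _ (derivable_pt_lim_minus _ _ _ _ _ D1 D2) D5.
  exact: D6.
have HO0 : Omega xs.
  have := Hsegin 0 ltac:(lra). have -> : vadd xs (vscal 0 e) = xs by vext. done.
have [a0 [Ha0 Hsmall]] := small_F HO HJ e HFxs HO0.
have HA := opnorm_ge0 A; have HD0 := opnorm_ge0 (DF xs).
set C2 := Rabs k1 + vnorm d * (opnorm A * ((opnorm (DF xs) + 1) * vnorm e)).
have HC2 : 0 <= C2.
  rewrite /C2; have := Rabs_pos k1; move=> H1.
  have : 0 <= vnorm d * (opnorm A * ((opnorm (DF xs) + 1) * vnorm e)).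
    apply: Rmult_le_pos => //; apply: Rmult_le_pos => //; apply: Rmult_le_pos; lra.
  lra.
have Hpsi1 : psi 1 = vnorm d * vnorm d - c0 * (p / (p + 1)).
  rewrite /psi /phi /H.
  have -> : vadd xs (vscal 1 e) = x by rewrite /e; vext.
  have E1 : vinner d d = k1 - vinner d (mv A (F x)) by rewrite {2}/d vinner_subr.
  rewrite Rpower_1_base vnorm_sq E1; field; lra.
have Hmain : vnorm d * vnorm d - c0 * (p / (p + 1)) <= 0.
  apply: (le_of_small (a1 := Rmin a0 1) _ HC2); first by apply: Rmin_glb_lt; lra.
  move=> a Ha.
  have Ha1 : a < a0 by have := Rmin_l a0 1; lra.
  have Ha2 : a < 1 by have := Rmin_r a0 1; lra.
  have [c [Hmvt Hcin]] := MVT_cor2 psi psi' a 1 Ha2 (fun c Hc => Hder c ltac:(lra)).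
  have Hpc : psi' c <= 0.
    rewrite /psi'.
    set Xc := vadd xs (vscal c e).
    have E2 : k1 - vinner d (mv A (mv (DF Xc) e)) = vinner d (mv (mm A (msub D (DF Xc))) e).
      by rewrite mv_mm mv_msub mv_sub vinner_subr.
    rewrite E2.
    have H1 := cs d (mv (mm A (msub D (DF Xc))) e).
    have H2 := opnorm_mv (mm A (msub D (DF Xc))) e.
    have H3 := Hc c ltac:(lra).
    rewrite rpow_pos in H3; last lra.
    have H4 : vnorm d * vnorm (mv (mm A (msub D (DF Xc))) e) <= vnorm d * (K * (1 - Rpower c p) * Ep * vnorm e).
      apply: Rmult_le_compat_l => //; apply: (Rle_trans _ _ _ H2); apply: Rmult_le_compat_r => //.
    have -> : c0 * (1 - Rpower c p) = vnorm d * (K * (1 - Rpower c p) * Ep * vnorm e) by rewrite /c0; ring.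
    lra.
  have Hle : psi 1 <= psi a.
    have : psi' c * (1 - a) <= 0 by nra.
    lra.
  rewrite -Hpsi1; apply: (Rle_trans _ _ _ Hle).
  rewrite /psi /phi /H.
  have Hpa : 0 <= a - Rpower a (p + 1) / (p + 1).
    rewrite Rpower_plus Rpower_1; last lra.
    have := Rpower_le1 (t := a) (q := p) ltac:(lra) ltac:(lra).
    have := Rpower_gt0 a p => Hg Hl.
    have : Rpower a p * a / (p + 1) <= a.
      apply: (Rmult_le_reg_r (p + 1)); first lra.
      rewrite /Rdiv Rmult_assoc Rinv_l; last lra.
      nra.
    lra.
  have HHa : 0 <= c0 * (a - Rpower a (p + 1) / (p + 1)) by apply: Rmult_le_pos.
  have HF1 := Hsmall a ltac:(lra).
  have H5 := cs_abs d (mv A (F (vadd xs (vscal a e)))).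
  have H6 := opnorm_mv A (F (vadd xs (vscal a e))).
  have H7 : vnorm d * vnorm (mv A (F (vadd xs (vscal a e)))) <= vnorm d * (opnorm A * (a * ((opnorm (DF xs) + 1) * vnorm e))).
    apply: Rmult_le_compat_l => //; apply: (Rle_trans _ _ _ H6); apply: Rmult_le_compat_l => //.
  have H8 : a * k1 <= a * Rabs k1 by apply: Rmult_le_compat_l; [lra| apply: Rle_abs].
  have H9 := Rle_abs (vinner d (mv A (F (vadd xs (vscal a e))))).
  have -> : a * C2 = a * Rabs k1 + vnorm d * (opnorm A * (a * ((opnorm (DF xs) + 1) * vnorm e))) by rewrite /C2; ring.
  have H10 := Rabs_Ropp (vinner d (mv A (F (vadd xs (vscal a e))))).
  have H11 := Rle_abs (- vinner d (mv A (F (vadd xs (vscal a e))))).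
  lra.
rewrite /c0 in Hmain.
have -> : K * p / (p + 1) * (vnorm e * Ep) = K * Ep * vnorm e * (p / (p + 1)) by field; lra.
have Hq : 0 <= K * Ep * vnorm e * (p / (p + 1)).
  apply: Rmult_le_pos; [apply: Rmult_le_pos; [apply: Rmult_le_pos|]|]; try lra.
  apply: Rmult_le_pos; [lra| apply: Rlt_le; apply: Rinv_0_lt_compat; lra].
set R0' := K * Ep * vnorm e * (p / (p + 1)) in Hq *.
have : vnorm d * vnorm d <= vnorm d * R0' by rewrite /R0'; lra.
nra.
Qed.
End Taylor.
Section Step.
Variable n : nat.

Lemma step_est (D DFxs A M P : mat n) (Fx e s r y' : vec n) (q delta w1 w2 vt eta theta : R) :
  mm DFxs A = mid -> mm A DFxs = mid ->
  invertible M -> invertible P ->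
  0 <= q < 1 -> 0 <= delta ->
  vnorm (vsub (mv A (mv D e)) (mv A Fx)) <= delta ->
  (forall v, vnorm (vsub (mv A (mv D v)) v) <= q * vnorm v) ->
  opnorm (mm (minv M) D) <= w1 ->
  opnorm (msub (mm (minv M) D) mid) <= w2 ->
  mv M s = vadd (vopp Fx) r ->
  vnorm (mv P r) <= eta * vnorm (mv P Fx) ->
  0 <= eta * cond (mm P D) <= vt ->
  0 <= w1 -> 0 <= vt -> 0 <= theta ->
  vinner y' y' <= vinner (vadd e s) (vadd e s) + 2 * (theta * vnorm s ^ 2) ->
  vnorm y' <= w1 * (1 + vt) * (1 + sqrt (2 * theta)) * (delta / (1 - q))
              + (w1 * ((1 + vt) * sqrt (2 * theta) + vt) + w2) * vnorm e.
Proof.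
move=> HA1 HA2 HMi HPi Hq Hdel Htay Hlin Hw1 Hw2 HMs HPr Heta Hw1p Hvt Hth Hcg.
have HDinv : invertible D.
  apply: inj_invertible => v Hv.
  have := Hlin v; rewrite Hv mv_zero.
  have -> : vsub (@vzero n) v = vopp v by vext.
  rewrite vnorm_opp => H; apply: vnorm_eq0; have := vnorm_ge0 v; nra.
set Di := minv D; have [HDi1 HDi2] := minv_spec HDinv.
set d := vsub (mv A (mv D e)) (mv A Fx) in Htay.
set z := mv Di (mv DFxs d).
have Hz1 : mv A (mv D z) = d by rewrite /z -(mv_mm D Di) HDi1 mv_mid -mv_mm HA2 mv_mid.
have Hq1 : 0 < 1 - q by lra.
set dl := delta / (1 - q).
have Hdl : 0 <= dl by apply: Rmult_le_pos; [lra| apply: Rlt_le; apply: Rinv_0_lt_compat].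
have Hz : vnorm z <= dl.
  have H1 := Hlin z; rewrite Hz1 in H1.
  have H2 := vnorm_sub d (vsub d z).
  have E2 : vsub d (vsub d z) = z by vext.
  rewrite E2 in H2.
  have H4 : (1 - q) * vnorm z <= delta by lra.
  rewrite /dl; apply: (Rmult_le_reg_l (1 - q)) => //.
  rewrite /Rdiv -Rmult_assoc (Rmult_comm (1 - q) delta) Rmult_assoc Rinv_r; lra.
have HFx : Fx = vsub (mv D e) (mv DFxs d).
  have -> : mv DFxs d = vsub (mv D e) Fx.
    by rewrite /d mv_sub -!(mv_mm DFxs A) HA1 !mv_mid.
  vext.
have HDiF : mv Di Fx = vsub e z by rewrite HFx mv_sub -mv_mm HDi2 mv_mid.
have He := vnorm_ge0 e.
have HDiFn : vnorm (mv Di Fx) <= vnorm e + dl.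
  rewrite HDiF; have := vnorm_sub e z; lra.
set G := minv M; have [HM1 HM2] := minv_spec HMi.
have Hs : s = vadd (vopp (mv G Fx)) (mv G r).
  by rewrite -mv_opp -mv_add -HMs -mv_mm HM2 mv_mid.
have HGD := opnorm_ge0 (mm G D).
have [P' [HP1 HP2]] := HPi.
have HPDinv : invertible (mm P D).
  exists (mm Di P'); split.
  - by rewrite -mm_assoc (mm_assoc D Di P') HDi1 mm_mid_l HP1.
  - by rewrite -mm_assoc (mm_assoc P' P D) HP2 mm_mid_l HDi2.
set Q := minv (mm P D); have [HQ1 HQ2] := minv_spec HPDinv.
have HDQ : mm D Q = P'.
  have : mm P' (mm P (mm D Q)) = P' by rewrite (mm_assoc P D Q) HQ1 mm_mid_r.
  by rewrite mm_assoc HP2 mm_mid_l.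
have HDQP : mm D (mm Q P) = mid by rewrite mm_assoc HDQ HP2.
have HGr : mv G r = mv (mm G D) (mv Q (mv P r)).
  by rewrite mv_mm -(mv_mm Q P) -(mv_mm D (mm Q P)) HDQP mv_mid.
have HQ := opnorm_ge0 Q; have HPD := opnorm_ge0 (mm P D).
have HGrn : vnorm (mv G r) <= w1 * vt * (vnorm e + dl).
  rewrite HGr.
  have H1 := opnorm_mv (mm G D) (mv Q (mv P r)).
  have H2 := opnorm_mv Q (mv P r).
  have HPrn := vnorm_ge0 (mv P r).
  have H3 : vnorm (mv (mm G D) (mv Q (mv P r))) <= w1 * (opnorm Q * vnorm (mv P r)).
    apply: (Rle_trans _ _ _ H1); apply: Rmult_le_compat => //; apply: vnorm_ge0.
  case: (Rle_dec 0 eta) => Heta0.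
  - have HPF : mv P Fx = mv (mm P D) (mv Di Fx) by rewrite mv_mm -(mv_mm D Di) HDi1 mv_mid.
    have H4 := opnorm_mv (mm P D) (mv Di Fx); rewrite -HPF in H4.
    have H5 : vnorm (mv P r) <= eta * (opnorm (mm P D) * (vnorm e + dl)).
      apply: (Rle_trans _ _ _ HPr); apply: Rmult_le_compat_l => //.
      apply: (Rle_trans _ _ _ H4); apply: Rmult_le_compat_l => //.
    apply: (Rle_trans _ _ _ H3).
    have H6 : opnorm Q * vnorm (mv P r) <= (eta * cond (mm P D)) * (vnorm e + dl).
      rewrite /cond -/Q.
      have -> : eta * (opnorm Q * opnorm (mm P D)) * (vnorm e + dl) = opnorm Q * (eta * (opnorm (mm P D) * (vnorm e + dl))) by ring.
      by apply: Rmult_le_compat_l.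
    have H7 : (eta * cond (mm P D)) * (vnorm e + dl) <= vt * (vnorm e + dl) by apply: Rmult_le_compat_r; lra.
    have -> : w1 * vt * (vnorm e + dl) = w1 * (vt * (vnorm e + dl)) by ring.
    apply: Rmult_le_compat_l => //; lra.
  - have HPF := vnorm_ge0 (mv P Fx).
    have HPr0 : vnorm (mv P r) = 0 by nra.
    rewrite (vnorm_eq0 HPr0) mv_zero mv_zero vnorm_zero.
    apply: Rmult_le_pos; [apply: Rmult_le_pos|]; lra.
have HGF : vnorm (mv G Fx) <= w1 * (vnorm e + dl).
  have -> : mv G Fx = mv (mm G D) (mv Di Fx) by rewrite mv_mm -(mv_mm D Di) HDi1 mv_mid.
  apply: (Rle_trans _ _ _ (opnorm_mv _ _)); apply: Rmult_le_compat => //; apply: vnorm_ge0.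
have Hsn : vnorm s <= w1 * (1 + vt) * (vnorm e + dl).
  rewrite Hs; apply: (Rle_trans _ _ _ (vnorm_add _ _)); rewrite vnorm_opp; lra.
have Hes : vadd e s = vadd (vadd (vopp (mv (msub (mm G D) mid) e)) (mv (mm G D) z)) (mv G r).
  rewrite Hs.
  have -> : mv G Fx = mv (mm G D) (mv Di Fx) by rewrite mv_mm -(mv_mm D Di) HDi1 mv_mid.
  rewrite HDiF mv_msub mv_mid mv_sub; vext.
have Hesn : vnorm (vadd e s) <= w2 * vnorm e + w1 * dl + w1 * vt * (vnorm e + dl).
  rewrite Hes; apply: (Rle_trans _ _ _ (vnorm_add _ _)).
  apply: Rplus_le_compat => //.
  apply: (Rle_trans _ _ _ (vnorm_add _ _)); rewrite vnorm_opp.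
  apply: Rplus_le_compat.
  - apply: (Rle_trans _ _ _ (opnorm_mv _ _)); apply: Rmult_le_compat_r => //.
  - apply: (Rle_trans _ _ _ (opnorm_mv _ _)); apply: Rmult_le_compat => //; apply: vnorm_ge0.
set mu := sqrt (2 * theta).
have Hmu : 0 <= mu by apply: sqrt_pos.
have Hmu2 : mu * mu = 2 * theta by apply: sqrt_sqrt; lra.
have Hy' : vnorm y' <= vnorm (vadd e s) + mu * vnorm s.
  have Hyn := vnorm_ge0 y'; have Hesp := vnorm_ge0 (vadd e s); have Hsp := vnorm_ge0 s.
  rewrite -!vnorm_sq in Hcg.
  have : vnorm y' * vnorm y' <= (vnorm (vadd e s) + mu * vnorm s) * (vnorm (vadd e s) + mu * vnorm s).
    have : 0 <= vnorm (vadd e s) * (mu * vnorm s) by apply: Rmult_le_pos => //; apply: Rmult_le_pos.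
    have E3 : 2 * (theta * vnorm s ^ 2) = (mu * mu) * (vnorm s * vnorm s) by rewrite Hmu2; ring.
    rewrite E3 in Hcg.
    nra.
  have : 0 <= vnorm (vadd e s) + mu * vnorm s by have := Rmult_le_pos _ _ Hmu Hsp; lra.
  nra.
have Hms : mu * vnorm s <= mu * (w1 * (1 + vt) * (vnorm e + dl)) by apply: Rmult_le_compat_l.
have -> : w1 * (1 + vt) * (1 + mu) * dl + (w1 * ((1 + vt) * mu + vt) + w2) * vnorm e
  = (w2 * vnorm e + w1 * dl + w1 * vt * (vnorm e + dl)) + mu * (w1 * (1 + vt) * (vnorm e + dl)) by ring.
lra.
Qed.
End Step.
Lemma ext_sup_spec (S : R -> Prop) : (exists t, S t) -> is_ext_sup S (ext_sup S).
Proof.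
move=> Hne; rewrite /ext_sup; apply: epsilon_spec.
case: (classic (exists M, forall t, S t -> t <= M)) => Hb.
- have [m Hm] := completeness S Hb Hne; by exists (Some m).
- exists None => M /=; apply: NNPP => HM; apply: Hb; exists M => t St.
  apply: Rnot_lt_le => Hlt; apply: HM; by exists t.
Qed.

Lemma ext_lt_witness (S : R -> Prop) k t : is_ext_sup S k -> ext_lt t k -> exists t', S t' /\ t < t'.
Proof.
case: k => [s|] /=.
- move=> [Hub Hlub] Hts; apply: NNPP => H; have : s <= t.
    apply: Hlub => t' St'; apply: Rnot_lt_le => Hlt; apply: H; by exists t'.
  lra.
- move=> H _; exact: H.
Qed.

Lemma ext_lt_le t t' k : ext_lt t k -> t' <= t -> ext_lt t' k.
Proof. case: k => [s|] //= H1 H2; lra. Qed.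

Lemma ext_min_lt t k r : t < ext_min k r -> ext_lt t k /\ t < r.
Proof. case: k => [s|] //= H; split; [have := Rmin_l s r| have := Rmin_r s r]; lra. Qed.

Lemma sqrt_subadd a b : 0 <= a -> 0 <= b -> sqrt (a + b) <= sqrt a + sqrt b.
Proof.
move=> Ha Hb; have Hsa := sqrt_pos a; have Hsb := sqrt_pos b.
rewrite -(sqrt_pow2 (sqrt a + sqrt b)); last lra.
apply: sqrt_le_1_alt.
have := sqrt_sqrt a Ha; have := sqrt_sqrt b Hb; nra.
Qed.

Lemma limsup_spec (u : nat -> R) m M : (forall k, m <= u k <= M) -> is_limsup u (limsup u).
Proof.
move=> Hb; have [l Hl] := ex_LimSup_seq u.
case: l Hl => [l| |] /= Hl.
- rewrite /limsup; apply: epsilon_spec; exists l => eps Heps.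
  have [H1 [N2 H2]] := Hl (mkposreal eps Heps); split.
  + exists N2 => k /leP Hk; exact: H2.
  + move=> N; have [k [Hk Hk']] := H1 N; exists k; split => //; by apply/leP.
- have [k [_ Hk]] := Hl (M + 1) 0%nat; have := Hb k; lra.
- have [N HN] := Hl m; have := HN N (le_n N); have := Hb N; lra.
Qed.
Theorem corollary1
  (n : nat) (Omega : vec n -> Prop) (F : vec n -> vec n) (DF : vec n -> mat n)
  (C : vec n -> Prop) (xs : vec n)
  (HOmega : vopen Omega) (HF : C1_on Omega F DF)
  (HCsub : forall x, C x -> Omega x) (HCconv : vconvex C) (HCcomp : vcompact C)
  (HCne : exists x, C x)
  (Hxs : C xs) (HFxs : F xs = (@vzero n)) (HDFxs : invertible (DF xs))
  (K p : R) (HK : 0 < K) (Hp : 0 < p <= 1)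
  (Hcenter : let kappa := ext_sup (fun t => 0 <= t /\ forall z, vdist z xs < t -> Omega z) in
     forall (tau : R) (x : vec n), 0 <= tau <= 1 -> ext_lt (vdist x xs) kappa ->
       opnorm (mm (minv (DF xs)) (msub (DF x) (DF (vadd xs (vscal tau (vsub x xs))))))
       <= K * (1 - rpow tau p) * rpow (vdist x xs) p)
  (vt w1 w2 lam : R) (Hvt : 0 <= vt < 1) (Hw : 0 <= w2 < w1) (Hw1 : w1 * vt + w2 < 1)
  (Hlam : 0 <= lam < (1 - w2 - w1 * vt) / (w1 * (1 + vt)))
  (x0 : vec n) (theta : nat -> R)
  (x : nat -> vec n) (M : nat -> mat n) (s r y : nat -> vec n)
  (P : nat -> mat n) (eta : nat -> R)
  (Hx0 : x 0%nat = x0)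
  (HxsC0 : C x0)
  (Hx0sig : let kappa := ext_sup (fun t => 0 <= t /\ forall z, vdist z xs < t -> Omega z) in
     let sigma := ext_min kappa
       (Rpower ((1 - w1 * ((1 + vt) * lam + vt) - w2) * (p + 1)
                / (K * (p - w1 * ((1 + vt) * lam + vt - p) - w2 * (p + 1) + 1))) (1 / p)) in
     vdist x0 xs < sigma)
  (Hx0ne : x0 <> xs)
  (Htheta : forall k, 0 <= theta k <= lam ^ 2 / 2)
  (Hnostop : forall k, F (x k) <> (@vzero n))
  (HMinv : forall k, invertible (M k))
  (Hlin : forall k, mv (M k) (s k) = vadd (vopp (F (x k))) (r k))
  (Hy : forall k, y k = vadd (x k) (s k))
  (Hstep : forall k, condG C (y k) (theta k * (vnorm (s k)) ^ 2) (x k) (x (S k)))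
  (Hw1k : forall k, opnorm (mm (minv (M k)) (DF (x k))) <= w1)
  (Hw2k : forall k, opnorm (msub (mm (minv (M k)) (DF (x k))) (@mid n)) <= w2)
  (HPinv : forall k, invertible (P k))
  (Hres : forall k, vnorm (mv (P k) (r k)) <= eta k * vnorm (mv (P k) (F (x k))))
  (Heta : forall k, 0 <= eta k * cond (mm (P k) (DF (x k))) <= vt) :
  let kappa := ext_sup (fun t => 0 <= t /\ forall z, vdist z xs < t -> Omega z) in
  let sigma := ext_min kappa
    (Rpower ((1 - w1 * ((1 + vt) * lam + vt) - w2) * (p + 1)
             / (K * (p - w1 * ((1 + vt) * lam + vt - p) - w2 * (p + 1) + 1))) (1 / p)) in
  (forall k, vdist (x k) xs < sigma /\ C (x k)) /\
  Un_cv (fun k => vdist (x k) xs) 0 /\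
  (forall k, vdist (x (S k)) xs < vdist (x k) xs) /\
  limsup (fun k => vdist (x (S k)) xs / vdist (x k) xs)
    <= w1 * ((1 + vt) * sqrt (2 * limsup theta) + vt) + w2 /\
  (forall k, vdist (x (S k)) xs <=
     w1 * (1 + vt) * (1 + lam) * p * K / ((p + 1) * (1 - K * rpow (vdist x0 xs) p))
       * rpow (vdist (x k) xs) (p + 1)
     + (w1 * ((1 + vt) * lam + vt) + w2) * vdist (x k) xs).
Proof.
move=> kappa sigma.
have Hc : forall (tau : R) (x : vec n), 0 <= tau <= 1 -> ext_lt (vdist x xs) kappa ->
   opnorm (mm (minv (DF xs)) (msub (DF x) (DF (vadd xs (vscal tau (vsub x xs))))))
       <= K * (1 - rpow tau p) * rpow (vdist x xs) p := Hcenter.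
have Hsig : vdist x0 xs < sigma := Hx0sig.
clear Hcenter Hx0sig.
set Sset := fun t => 0 <= t /\ forall z, vdist z xs < t -> Omega z.
have Hks : is_ext_sup Sset kappa.
  apply: ext_sup_spec; exists 0; split; [lra| move=> z Hz; have := vnorm_ge0 (vsub z xs); rewrite /vdist in Hz; lra].
have Hball : forall z, ext_lt (vdist z xs) kappa -> Omega z.
  move=> z Hz; have [t [[_ Ht] Hlt]] := ext_lt_witness Hks Hz; exact: Ht.
have [HJ _] := HF.
have [He0k He0R] := ext_min_lt Hsig.
set e0 := vdist x0 xs in He0k He0R Hsig *.
have He0 : 0 < e0.
  have H1 : 0 <= e0 by apply: vnorm_ge0.
  case: (Req_dec e0 0) => H0; last lra.
  by have := vdist_eq0 H0.
have [HA1 HA2] := minv_spec HDFxs.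
set A := minv (DF xs) in Hc HA1 HA2.
have Hw1p : 0 < w1 by lra.
have Hvt0 : 0 <= vt by lra.
set B := w1 * ((1 + vt) * lam + vt) + w2.
have HB : B < 1.
  have H1 : lam * (w1 * (1 + vt)) < 1 - w2 - w1 * vt.
    have Hd : 0 < w1 * (1 + vt) by nra.
    have := Rmult_lt_compat_r _ _ _ Hd (proj2 Hlam).
    rewrite /Rdiv Rmult_assoc Rinv_l; lra.
  rewrite /B; nra.
have HB0 : 0 <= B.
  have H1 : 0 <= (1 + vt) * lam + vt by have := Rmult_le_pos (1 + vt) lam ltac:(lra) (proj1 Hlam); lra.
  rewrite /B; have := Rmult_le_pos _ _ (Rlt_le _ _ Hw1p) H1; lra.
set Nm := (1 - B) * (p + 1).
set W := w1 * (1 + vt) * (1 + lam) * p.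
have HNm : 0 < Nm by rewrite /Nm; apply: Rmult_lt_0_compat; lra.
have HW : 0 < W.
  rewrite /W; apply: Rmult_lt_0_compat; last lra.
  apply: Rmult_lt_0_compat; last (have := proj1 Hlam; lra).
  apply: Rmult_lt_0_compat; lra.
set Qb := (1 - w1 * ((1 + vt) * lam + vt) - w2) * (p + 1)
             / (K * (p - w1 * ((1 + vt) * lam + vt - p) - w2 * (p + 1) + 1)) in He0R.
have HQb : Qb = Nm / (K * (Nm + W)) by rewrite /Qb /Nm /W /B; congr (_ / (K * _)); ring.
have HQb0 : 0 < Qb by rewrite HQb; apply: Rdiv_lt_0_compat => //; apply: Rmult_lt_0_compat; lra.
have HEp0 : Rpower e0 p < Qb.
  have H1 : Rpower e0 p < Rpower (Rpower Qb (1 / p)) p by apply: Rlt_Rpower_l; lra.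
  by rewrite Rpower_mult (_ : 1 / p * p = 1) ?Rpower_1 in H1; last by field; lra.
set q0 := K * rpow e0 p.
have Hq0 : q0 * (Nm + W) < Nm.
  rewrite /q0 rpow_pos //.
  have H1 : K * Rpower e0 p < K * Qb by apply: Rmult_lt_compat_l.
  rewrite HQb in H1.
  rewrite (_ : K * (Nm / (K * (Nm + W))) = Nm / (Nm + W)) in H1; last by field; lra.
  have := Rmult_lt_compat_r (Nm + W) _ _ ltac:(lra) H1.
  rewrite (_ : Nm / (Nm + W) * (Nm + W) = Nm); last by field; lra.
  lra.
have Hq00 : 0 < q0 by rewrite /q0 rpow_pos //; apply: Rmult_lt_0_compat => //; apply: Rpower_gt0.
have Hq01 : q0 < 1 by nra.
set c := w1 * (1 + vt) * (1 + lam) * p * K / ((p + 1) * (1 - q0)).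
have Hc0 : 0 <= c.
  rewrite /c; apply: Rmult_le_pos.
  - have : 0 <= W by lra. rewrite /W => H; apply: Rmult_le_pos; lra.
  - apply: Rlt_le; apply: Rinv_0_lt_compat; apply: Rmult_lt_0_compat; lra.
set rho := c * rpow e0 p + B.
have Hrho : rho < 1.
  rewrite /rho.
  have Hq01' : K * rpow e0 p < 1 := Hq01.
  have -> : c * rpow e0 p = W * q0 / ((p + 1) * (1 - q0)) by rewrite /c /q0 /W; field; lra.
  apply: (Rplus_lt_reg_r (- B)).
  have -> : W * q0 / ((p + 1) * (1 - q0)) + B + - B = W * q0 / ((p + 1) * (1 - q0)) by ring.
  apply: (Rmult_lt_reg_r ((p + 1) * (1 - q0))); first by apply: Rmult_lt_0_compat; lra.
  rewrite /Rdiv Rmult_assoc Rinv_l; last by apply: Rgt_not_eq; apply: Rmult_lt_0_compat; lra.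
  rewrite /Nm in Hq0; nra.
have Hrho0 : 0 <= rho by rewrite /rho; have := Rmult_le_pos _ _ Hc0 (rpow_ge0 e0 p); lra.
have HK0 : 0 <= K by lra.
have Hone : forall k, C (x k) -> vdist (x k) xs <= e0 ->
  0 < vdist (x k) xs /\ C (x (S k)) /\
  vdist (x (S k)) xs <= w1 * (1 + vt) * (1 + sqrt (2 * theta k))
      * ((K * p / (p + 1) * rpow (vdist (x k) xs) (p + 1)) / (1 - K * rpow (vdist (x k) xs) p))
    + (w1 * ((1 + vt) * sqrt (2 * theta k) + vt) + w2) * vdist (x k) xs.
  move=> k HCk Hek.
  have HEk : ext_lt (vdist (x k) xs) kappa by apply: (ext_lt_le He0k).
  have HE0 : 0 <= vdist (x k) xs by apply: vnorm_ge0.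
  have HEpos : 0 < vdist (x k) xs.
    case: (Req_dec (vdist (x k) xs) 0) => H0; last lra.
    have := vdist_eq0 H0 => Hx; exfalso; apply: (Hnostop k); by rewrite Hx.
  split => //.
  have Hseg : forall t, 0 <= t <= 1 -> Omega (vadd xs (vscal t (vsub (x k) xs))).
    move=> t Ht; apply: Hball; apply: (ext_lt_le HEk).
    rewrite /vdist (_ : vsub (vadd xs (vscal t (vsub (x k) xs))) xs = vscal t (vsub (x k) xs)); last by vext.
    rewrite vnorm_scal Rabs_right; last lra.
    rewrite /vdist in HE0 |- *; nra.
  have Htay := taylor HOmega HJ HK0 (proj1 Hp) HFxs Hseg (fun t Ht => Hc t (x k) Ht HEk).
  set E := vdist (x k) xs in Hek HEk HE0 HEpos Htay *.
  have HqE : K * rpow E p <= q0 by apply: Rmult_le_compat_l => //; apply: rpow_le; lra.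
  have HqE0 : 0 <= K * rpow E p by apply: Rmult_le_pos => //; apply: rpow_ge0.
  have Hlin' : forall v, vnorm (vsub (mv A (mv (DF (x k)) v)) v) <= (K * rpow E p) * vnorm v.
    move=> v.
    have H1 := Hc 0 (x k) ltac:(lra) HEk.
    rewrite (_ : vadd xs (vscal 0 (vsub (x k) xs)) = xs) in H1; last by vext.
    rewrite rpow_0 in H1.
    have H2 := opnorm_mv (mm A (msub (DF (x k)) (DF xs))) v.
    rewrite mv_mm mv_msub mv_sub -(mv_mm A (DF xs)) HA2 mv_mid in H2.
    apply: (Rle_trans _ _ _ H2); apply: Rmult_le_compat_r; first by apply: vnorm_ge0.
    rewrite /E; lra.
  have Heps0 : 0 <= theta k * vnorm (s k) ^ 2.
    apply: Rmult_le_pos; first by have := Htheta k; lra.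
    apply: pow_le; apply: vnorm_ge0.
  have [HC' Hcg] := condG_prop (Hstep k) HCconv HCk Heps0 Hxs.
  split => //.
  rewrite (Hy k) (_ : vsub (vadd (x k) (s k)) xs = vadd (vsub (x k) xs) (s k)) in Hcg; last by vext.
  have Hdel : 0 <= K * p / (p + 1) * rpow E (p + 1).
    apply: Rmult_le_pos; last by apply: rpow_ge0.
    apply: Rmult_le_pos; [apply: Rmult_le_pos; lra| apply: Rlt_le; apply: Rinv_0_lt_compat; lra].
  have HqE1 : K * rpow E p < 1 by lra.
  have Hw10 : 0 <= w1 by lra.
  have Hth0 : 0 <= theta k by have := Htheta k; lra.
  have := step_est HA1 HA2 (HMinv k) (HPinv k) (conj HqE0 HqE1) Hdel Htay Hlin' (Hw1k k) (Hw2k k)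
     (Hlin k) (Hres k) (Heta k) Hw10 Hvt0 Hth0 Hcg.
  by [].
have Hmu : forall k, sqrt (2 * theta k) <= lam.
  move=> k; have := Htheta k => Ht.
  rewrite -(sqrt_pow2 lam); last lra.
  apply: sqrt_le_1_alt; lra.
have Hmu0 : forall k, 0 <= sqrt (2 * theta k) by move=> k; apply: sqrt_pos.
have Hterm : forall k, 0 < vdist (x k) xs <= e0 ->
  w1 * (1 + vt) * (1 + sqrt (2 * theta k))
      * ((K * p / (p + 1) * rpow (vdist (x k) xs) (p + 1)) / (1 - K * rpow (vdist (x k) xs) p))
  + (w1 * ((1 + vt) * sqrt (2 * theta k) + vt) + w2) * vdist (x k) xs
  <= c * rpow (vdist (x k) xs) (p + 1) + B * vdist (x k) xs.
  move=> k [HE1 HE2].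
  set E := vdist (x k) xs in HE1 HE2 *.
  have HqE : K * rpow E p <= q0 by apply: Rmult_le_compat_l => //; apply: rpow_le; lra.
  set a := K * p / (p + 1) * rpow E (p + 1).
  have Ha : 0 <= a.
    apply: Rmult_le_pos; last by apply: rpow_ge0.
    apply: Rmult_le_pos; [apply: Rmult_le_pos; lra| apply: Rlt_le; apply: Rinv_0_lt_compat; lra].
  have H1 : a / (1 - K * rpow E p) <= a / (1 - q0).
    apply: Rmult_le_compat_l => //; apply: Rinv_le_contravar; lra.
  have H2 : 0 <= a / (1 - K * rpow E p).
    apply: Rmult_le_pos => //; apply: Rlt_le; apply: Rinv_0_lt_compat; lra.
  have Hmk := Hmu k; have Hmk0 := Hmu0 k.
  have H3 : w1 * (1 + vt) * (1 + sqrt (2 * theta k)) * (a / (1 - K * rpow E p))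
       <= w1 * (1 + vt) * (1 + lam) * (a / (1 - q0)).
    apply: Rmult_le_compat => //.
    - apply: Rmult_le_pos; [apply: Rmult_le_pos|]; lra.
    - apply: Rmult_le_compat_l; [apply: Rmult_le_pos|]; lra.
  have H4 : w1 * (1 + vt) * (1 + lam) * (a / (1 - q0)) = c * rpow E (p + 1).
    by rewrite /a /c; field; lra.
  have H5 : (w1 * ((1 + vt) * sqrt (2 * theta k) + vt) + w2) * E <= B * E.
    apply: Rmult_le_compat_r; first lra.
    rewrite /B; apply: Rplus_le_compat_r; apply: Rmult_le_compat_l; first lra.
    apply: Rplus_le_compat_r; apply: Rmult_le_compat_l; lra.
  lra.
have Hcontr : forall k, 0 < vdist (x k) xs <= e0 ->
  c * rpow (vdist (x k) xs) (p + 1) + B * vdist (x k) xs <= rho * vdist (x k) xs.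
  move=> k [HE1 HE2].
  rewrite rpow_plus1; last lra.
  have : rpow (vdist (x k) xs) p <= rpow e0 p by apply: rpow_le; lra.
  rewrite /rho => H; have := Rmult_le_compat_l _ _ _ Hc0 H; nra.
have Hinv : forall k, C (x k) /\ vdist (x k) xs <= rho ^ k * e0 /\ 0 <= rho ^ k <= 1.
  elim => [|k [HCk [Hek Hrk]]].
  - rewrite Hx0 /=; split; first exact: HxsC0. rewrite -/e0; split; lra.
  - have Hek' : vdist (x k) xs <= e0 by nra.
    have [HE [HC' Hb]] := Hone k HCk Hek'.
    have := Hterm k (conj HE Hek'); have := Hcontr k (conj HE Hek') => H1 H2.
    split => //; rewrite /=; split; nra.
have HE0k : forall k, 0 < vdist (x k) xs <= e0.
  move=> k; have [HCk [Hek Hrk]] := Hinv k.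
  have Hek' : vdist (x k) xs <= e0 by nra.
  by have [HE _] := Hone k HCk Hek'.
have Hbnd : forall k, vdist (x (S k)) xs <= c * rpow (vdist (x k) xs) (p + 1) + B * vdist (x k) xs.
  move=> k; have [HCk _] := Hinv k.
  have [_ [_ Hb]] := Hone k HCk (proj2 (HE0k k)).
  have := Hterm k (HE0k k); lra.
have Hdec : forall k, vdist (x (S k)) xs <= rho * vdist (x k) xs.
  move=> k; have := Hbnd k; have := Hcontr k (HE0k k); lra.
have Hcv : Un_cv (fun k => vdist (x k) xs) 0.
  move=> eps Heps.
  have [N HN] := pow_lt_1_zero rho ltac:(rewrite Rabs_right; lra) (eps / e0) ltac:(apply: Rdiv_lt_0_compat; lra).
  exists N => k Hk; rewrite /R_dist Rminus_0_r Rabs_right; last by have := HE0k k; lra.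
  have [_ [Hek Hrk]] := Hinv k.
  have := HN k Hk; rewrite Rabs_right; last lra.
  move=> H; apply: (Rle_lt_trans _ _ _ Hek).
  have := Rmult_lt_compat_r e0 _ _ He0 H.
  rewrite (_ : eps / e0 * e0 = eps) //; field; lra.
split.
  move=> k; have [HCk [Hek Hrk]] := Hinv k; split => //; nra.
split => //.
split.
  move=> k; have := Hdec k; have := HE0k k => H1 H2; nra.
split; last first.
  move=> k; exact: Hbnd k.
set u := fun k => vdist (x (S k)) xs / vdist (x k) xs.
have Hratio : forall k, u k <= c * rpow (vdist (x k) xs) p + (w1 * ((1 + vt) * sqrt (2 * theta k) + vt) + w2).
  move=> k; have [HCk _] := Hinv k.
  have [HE1 HE2] := HE0k k.
  have [_ [_ Hb]] := Hone k HCk HE2.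
  have Ht := Hterm k (HE0k k).
  set E := vdist (x k) xs in HE1 HE2 Hb Ht *.
  set a := K * p / (p + 1) * rpow E (p + 1) in Hb Ht.
  have Ha : 0 <= a.
    apply: Rmult_le_pos; last by apply: rpow_ge0.
    apply: Rmult_le_pos; [apply: Rmult_le_pos; lra| apply: Rlt_le; apply: Rinv_0_lt_compat; lra].
  have HqE : K * rpow E p <= q0 by apply: Rmult_le_compat_l => //; apply: rpow_le; lra.
  have H1 : a / (1 - K * rpow E p) <= a / (1 - q0).
    apply: Rmult_le_compat_l => //; apply: Rinv_le_contravar; lra.
  have Hmk := Hmu k; have Hmk0 := Hmu0 k.
  have H3 : w1 * (1 + vt) * (1 + sqrt (2 * theta k)) * (a / (1 - K * rpow E p))
       <= w1 * (1 + vt) * (1 + lam) * (a / (1 - q0)).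
    apply: Rmult_le_compat => //.
    - apply: Rmult_le_pos; [apply: Rmult_le_pos|]; lra.
    - apply: Rmult_le_pos => //; apply: Rlt_le; apply: Rinv_0_lt_compat; lra.
    - apply: Rmult_le_compat_l; [apply: Rmult_le_pos|]; lra.
  have H4 : w1 * (1 + vt) * (1 + lam) * (a / (1 - q0)) = c * rpow E (p + 1).
    by rewrite /a /c; field; lra.
  rewrite rpow_plus1 in H4; last lra.
  rewrite /u -/E.
  apply: (Rmult_le_reg_r E) => //.
  rewrite (_ : vdist (x (S k)) xs / E * E = vdist (x (S k)) xs); last by field; lra.
  lra.
have Hub : forall k, 0 <= u k <= 1.
  move=> k; have [HE1 _] := HE0k k; have := Hdec k; have H0 : 0 <= vdist (x (S k)) xs by apply: vnorm_ge0.
  move=> H; rewrite /u; split.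
  - apply: Rmult_le_pos => //; apply: Rlt_le; apply: Rinv_0_lt_compat; lra.
  - apply: (Rmult_le_reg_r (vdist (x k) xs)) => //.
    rewrite (_ : vdist (x (S k)) xs / vdist (x k) xs * vdist (x k) xs = vdist (x (S k)) xs); last by field; lra.
    nra.
have HLu := limsup_spec Hub.
have HLt := limsup_spec Htheta.
set Lu := limsup u in HLu *.
set Lt := limsup theta in HLt *.
have HLt0 : 0 <= Lt.
  apply: Rnot_lt_le => H.
  have [[N HN] _] := HLt (- Lt) ltac:(lra).
  have := HN N (leqnn N); have := Htheta N; lra.
set Y := w1 * ((1 + vt) * sqrt (2 * Lt) + vt) + w2.
have Hs2 := sqrt_pos 2.
have HC : 0 <= c + w1 * (1 + vt) * sqrt 2 + 1.
  have : 0 <= w1 * (1 + vt) * sqrt 2 by apply: Rmult_le_pos => //; apply: Rmult_le_pos; lra.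
  lra.
have : Lu - Y <= 0.
  apply: (le_of_small (a1 := 1) Rlt_0_1 HC) => eta0 Heta0.
  set ep := eta0 * eta0.
  have Hep : 0 < ep by rewrite /ep; nra.
  have Hepe : ep <= eta0 by rewrite /ep; nra.
  have [[N1 HN1] _] := HLt ep Hep.
  have Hr0 : 0 < Rpower ep (1 / p) by apply: Rpower_gt0.
  have [N2 HN2] := Hcv _ Hr0.
  have [_ Hfr] := HLu ep Hep.
  have [k [Hk Hk']] := Hfr (maxn N1 N2).
  have Hk1 : (N1 <= k)%nat by apply: leq_trans Hk; apply: leq_maxl.
  have Hk2 : (k >= N2)%coq_nat by apply/leP; apply: leq_trans Hk; apply: leq_maxr.
  have Hth := HN1 k Hk1.
  have HEk := HN2 k Hk2; rewrite /R_dist Rminus_0_r Rabs_right in HEk; last by have := HE0k k; lra.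
  have Hrp : rpow (vdist (x k) xs) p <= ep.
    have := rpow_le (a := vdist (x k) xs) (b := Rpower ep (1 / p)) (q := p) ltac:(lra) ltac:(have := HE0k k; lra).
    rewrite (rpow_pos _ Hr0) Rpower_mult (_ : 1 / p * p = 1) ?Rpower_1 //; field; lra.
  have Hmuk : sqrt (2 * theta k) <= sqrt (2 * Lt) + sqrt 2 * eta0.
    have H1 : sqrt (2 * theta k) <= sqrt (2 * Lt + 2 * ep) by apply: sqrt_le_1_alt; lra.
    have H2 := sqrt_subadd (a := 2 * Lt) (b := 2 * ep) ltac:(lra) ltac:(lra).
    rewrite (sqrt_mult 2 ep) in H2; [|lra|lra].
    rewrite /ep sqrt_square in H2; last lra. rewrite /ep in H1; lra.
  have Hrk := Hratio k.
  have H5 : c * rpow (vdist (x k) xs) p <= c * eta0.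
    apply: Rmult_le_compat_l => //; lra.
  have H6 : w1 * ((1 + vt) * sqrt (2 * theta k) + vt) + w2 <= Y + w1 * (1 + vt) * sqrt 2 * eta0.
    rewrite /Y.
    have : w1 * (1 + vt) * sqrt (2 * theta k) <= w1 * (1 + vt) * (sqrt (2 * Lt) + sqrt 2 * eta0).
      apply: Rmult_le_compat_l => //; apply: Rmult_le_pos; lra.
    lra.
  rewrite -/u in Hk'.
  have : eta0 * (c + w1 * (1 + vt) * sqrt 2 + 1) = c * eta0 + w1 * (1 + vt) * sqrt 2 * eta0 + eta0 by ring.
  lra.
rewrite -/Y; lra.
Qed.
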